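(* Let $0<\rho_1<\rho_2=1$, $\alpha=\frac{\rho_2-\rho_1}{\rho_2+\rho_1}$, $\kappa=\frac{\alpha+1}{\alpha}$, and let $F$ be a $C^2$ function on $(-1,1)$. Let $(\mathbf{u},p,\phi,\mu)$ be a smooth solution on $\mathbb{T}^3\times(0,T)$ of \begin{align*} &\partial_t(\rho\mathbf{u})+\operatorname{div}(\rho\mathbf{u}\otimes\mathbf{u})+\nabla p=\operatorname{div}(\rho\,\mathbb{D}\mathbf{u})-\phi\nabla\mu,\qquad \partial_t\rho+\operatorname{div}(\rho\mathbf{u})=0,\\ &\partial_t\phi+\operatorname{div}(\phi\mathbf{u})=\Delta(\mu+\alpha p),\qquad \mu=-\Delta\phi+F'(\phi), \end{align*} where $\rho=\rho_1\frac{1+\phi}{2}+\rho_2\frac{1-\phi}{2}$ and $\phi$ takes values in $(-1,1)$. Set $\mu_p=\mu+\alpha p$ and $\widetilde{F}(r)=F(-\kappa r+\kappa-1)$. Then for all $t\in(0,T)$, \begin{align*} &\frac{\mathrm{d}}{\mathrm{d}t}\int_{\mathbb{T}^3}\Big(\frac{\rho}{2}|\mathbf{u}+\nabla\ln\rho|^2+\frac12|\nabla\phi|^2+F(\phi)-\frac{1}{\alpha^2}\ln\rho\Big)\mathrm{d}x+\int_{\mathbb{T}^3}|\nabla\mu_p|^2\,\mathrm{d}x\\ &\quad+\int_{\mathbb{T}^3}\widetilde{F}''(\rho)|\nabla\rho|^2\,\mathrm{d}x+\kappa^2\int_{\mathbb{T}^3}|\Delta\rho|^2\,\mathrm{d}x+\frac14\int_{\mathbb{T}^3}\rho\,|\nabla\mathbf{u}-(\nabla\mathbf{u})^\top|^2\,\mathrm{d}x=0.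 \end{align*}
   Context: $\mathbb{T}^3=\mathbb{R}^3/\mathbb{Z}^3$ with periodic boundary conditions; $\mathbb{D}\mathbf{u}=\frac12(\nabla\mathbf{u}+(\nabla\mathbf{u})^\top)$. Note that $\phi=-\kappa\rho+\kappa-1$ is the inverse of the density relation, and $\phi\in(-1,1)$ implies $\rho_1<\rho<1$. *)

(* Defs.v *)
From Stdlib Require Import Reals Lra List.
From Coquelicot Require Import Coquelicot.
Open Scope R_scope.

(* A scalar field on R^3 x R : arguments (x1, x2, x3, t). *)
Definition fld := R -> R -> R -> R -> R.

(* Partial derivative: k = 0,1,2 spatial directions x1,x2,x3; any other k = time. *)
Definition pd (k : nat) (f : fld) : fld :=
  fun a b c t => match k with
  | 0%nat => Derive (fun s => f s b c t) a
  | 1%nat => Derive (fun s => f a s c t) b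
  | 2%nat => Derive (fun s => f a b s t) c
  | _ => Derive (fun s => f a b c s) t
  end.

Definition dt (f : fld) : fld := pd 3 f.

Definition ex_pd (k : nat) (f : fld) (a b c t : R) : Prop :=
  match k with
  | 0%nat => ex_derive (fun s => f s b c t) a
  | 1%nat => ex_derive (fun s => f a s c t) b
  | 2%nat => ex_derive (fun s => f a b s t) c
  | _ => ex_derive (fun s => f a b c s) t
  end.

Fixpoint pdl (l : list nat) (f : fld) : fld :=
  match l with nil => f | k :: l' => pd k (pdl l' f) end.

Definition uncurry4 (f : fld) : R * R * R * R -> R :=
  fun q => match q with (a, b, c, t) => f a b c t end.

Definition smooth_on (U : R -> R -> R -> R -> Prop) (f : fld) : Prop :=
  forall (l : list nat) (a b c t : R), U a b c t ->
    continuous (uncurry4 (pdl l f)) (a, b, c, t) /\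
    forall k, ex_pd k (pdl l f) a b c t.

Definition slab (T : R) : R -> R -> R -> R -> Prop := fun _ _ _ t => 0 < t < T.

(* 1-periodicity in each space variable: functions on T^3 = R^3/Z^3. *)
Definition periodic (f : fld) : Prop :=
  forall a b c t, f (a + 1) b c t = f a b c t /\ f a (b + 1) c t = f a b c t /\
                  f a b (c + 1) t = f a b c t.

Definition C2_on_m11 (F : R -> R) : Prop :=
  forall r, -1 < r < 1 ->
    ex_derive F r /\ ex_derive (Derive F) r /\ continuous (Derive_n F 2) r.

Definition sum3 (g : nat -> R) : R := g 0%nat + g 1%nat + g 2%nat.

Definition lap (f : fld) : fld := fun a b c t => sum3 (fun j => pd j (pd j f) a b c t).

(* Integral over the torus T^3 (fundamental domain [0,1]^3), iterated. *)
Definition Int3 (g : R -> R -> R -> R) : R :=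
  RInt (fun a => RInt (fun b => RInt (fun c => g a b c) 0 1) 0 1) 0 1.

Definition rho2 : R := 1.
Definition alpha (rho1 : R) : R := (rho2 - rho1) / (rho2 + rho1).
Definition kappa (rho1 : R) : R := (alpha rho1 + 1) / alpha rho1.

Definition dens (rho1 : R) (phi : fld) : fld :=
  fun a b c t => rho1 * (1 + phi a b c t) / 2 + rho2 * (1 - phi a b c t) / 2.

Definition Ftilde (rho1 : R) (F : R -> R) : R -> R :=
  fun r => F (- kappa rho1 * r + kappa rho1 - 1).

Definition energy (rho1 : R) (F : R -> R) (u : nat -> fld) (phi : fld) (t : R) : R :=
  let rho := dens rho1 phi in
  Int3 (fun a b c =>
    rho a b c t / 2 *
      sum3 (fun j => (u j a b c t + pd j (fun a' b' c' t' => ln (rho a' b' c' t')) a b c t) ^ 2)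
    + 1 / 2 * sum3 (fun j => (pd j phi a b c t) ^ 2)
    + F (phi a b c t)
    - 1 / (alpha rho1) ^ 2 * ln (rho a b c t)).

Definition dissipation (rho1 : R) (F : R -> R) (u : nat -> fld) (p phi mu : fld) (t : R) : R :=
  let rho := dens rho1 phi in
  let mup : fld := fun a b c t => mu a b c t + alpha rho1 * p a b c t in
  Int3 (fun a b c => sum3 (fun j => (pd j mup a b c t) ^ 2))
  + Int3 (fun a b c => Derive_n (Ftilde rho1 F) 2 (rho a b c t) *
                        sum3 (fun j => (pd j rho a b c t) ^ 2))
  + (kappa rho1) ^ 2 * Int3 (fun a b c => (lap rho a b c t) ^ 2)
  + 1 / 4 * Int3 (fun a b c => rho a b c t *
       sum3 (fun i => sum3 (fun j => (pd j (u i) a b c t - pd i (u j) a b c t) ^ 2))).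

(* Main.v *)
Require Import Defs.
From Stdlib Require Import Reals Lra Lia List Classical FunctionalExtensionality IndefiniteDescription.
From Coquelicot Require Import Coquelicot.
Open Scope R_scope.

Arguments pd : simpl never.

Definition P4 := (R * R * R * R)%type.

Definition upd (k : nat) (q : P4) (s : R) : P4 :=
  match q with (a, b, c, t) =>
  match k with 0%nat => (s, b, c, t) | 1%nat => (a, s, c, t) | 2%nat => (a, b, s, t)
  | _ => (a, b, c, s) end end.

Definition crd (k : nat) (q : P4) : R :=
  match q with (a, b, c, t) =>
  match k with 0%nat => a | 1%nat => b | 2%nat => c | _ => t end end.

Definition tm (q : P4) : R := match q with (_, _, _, t) => t end.

Lemma pd_upd k f a b c t :
  pd k f a b c t = Derive (fun s => uncurry4 f (upd k (a, b, c, t) s)) (crd k (a, b, c, t)).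
Proof. destruct k as [|[|[|k]]]; reflexivity. Qed.

Lemma pd_upd' k f q :
  uncurry4 (pd k f) q = Derive (fun s => uncurry4 f (upd k q s)) (crd k q).
Proof. destruct q as [[[a b] c] t]. apply pd_upd. Qed.

Lemma ex_pd_upd k f q :
  ex_pd k f (fst (fst (fst q))) (snd (fst (fst q))) (snd (fst q)) (snd q) <->
  ex_derive (fun s => uncurry4 f (upd k q s)) (crd k q).
Proof. destruct q as [[[a b] c] t]. destruct k as [|[|[|k]]]; simpl; tauto. Qed.

Lemma upd_crd k q : upd k q (crd k q) = q.
Proof. destruct q as [[[a b] c] t]. destruct k as [|[|[|k]]]; reflexivity. Qed.

Definition cls (k : nat) : nat := Nat.min k 3.

Lemma upd_comm j k q s r : cls j <> cls k ->
  upd k (upd j q s) r = upd j (upd k q r) s.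
Proof.
  destruct q as [[[a b] c] t]; unfold cls.
  destruct j as [|[|[|j]]]; destruct k as [|[|[|k]]]; simpl; intros H; try reflexivity;
  exfalso; apply H; try reflexivity; rewrite ?Nat.min_r; lia.
Qed.

Lemma crd_upd_ne j k q s : cls j <> cls k -> crd k (upd j q s) = crd k q.
Proof.
  destruct q as [[[a b] c] t]; unfold cls.
  destruct j as [|[|[|j]]]; destruct k as [|[|[|k]]]; simpl; intros H; try reflexivity;
  exfalso; apply H; try reflexivity; rewrite ?Nat.min_r; lia.
Qed.

Lemma crd_upd k q s : crd k (upd k q s) = s.
Proof. destruct q as [[[a b] c] t]. destruct k as [|[|[|k]]]; reflexivity. Qed.

Lemma upd_upd k q s r : upd k (upd k q s) r = upd k q r.
Proof. destruct q as [[[a b] c] t]. destruct k as [|[|[|k]]]; reflexivity. Qed.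

Lemma tm_upd k q s : tm (upd k q s) = if (k <? 3)%nat then tm q else s.
Proof. destruct q as [[[a b] c] t]. destruct k as [|[|[|k]]]; reflexivity. Qed.

Lemma locally_prod_ball {U V : UniformSpace} (x : U) (y : V) (P : U * V -> Prop) :
  locally (x, y) P -> exists eps : posreal, forall u v, ball x eps u -> ball y eps v -> P (u, v).
Proof. intros [eps H]. exists eps. intros u v Hu Hv. apply H. split; assumption. Qed.

Lemma continuous_pair {U V W : UniformSpace} (f : U -> V) (g : U -> W) x :
  continuous f x -> continuous g x -> continuous (fun z => (f z, g z)) x.
Proof.
  intros Hf Hg P HP.
  destruct (locally_prod_ball _ _ _ HP) as [eps He].
  assert (H1 := Hf (ball (f x) eps) (locally_ball _ _)).
  assert (H2 := Hg (ball (g x) eps) (locally_ball _ _)).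
  unfold filtermap in *.
  apply (filter_imp (fun z => ball (f x) eps (f z) /\ ball (g x) eps (g z))).
  - intros z [Hz1 Hz2]. apply He; assumption.
  - apply filter_and; assumption.
Qed.

Ltac cont_tac :=
  repeat first [ apply continuous_pair | apply continuous_id | apply continuous_const ].

Lemma continuous_upd k q s : continuous (fun s => upd k q s) s.
Proof.
  destruct q as [[[a b] c] t].
  destruct k as [|[|[|k]]]; simpl; cont_tac.
Qed.

Lemma pdl_app l1 l2 f : pdl (l1 ++ l2) f = pdl l1 (pdl l2 f).
Proof. induction l1 as [|k l1 IH]; simpl; [reflexivity|now rewrite IH]. Qed.

Lemma pd_cls j g : pd j g = pd (cls j) g.
Proof. destruct j as [|[|[|j]]]; reflexivity. Qed.

Section SmoothSec.
Variable T : R.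

Definition inslab (q : P4) := 0 < tm q < T.
Definition Sm (f : fld) := smooth_on (slab T) f.

Lemma Sm_pdl l f : Sm f -> Sm (pdl l f).
Proof. intros H l' a b c t Ht. rewrite <- pdl_app. apply H, Ht. Qed.

Lemma Sm_pd k f : Sm f -> Sm (pd k f).
Proof. intros H. apply (Sm_pdl (k :: nil)), H. Qed.

Lemma Sm_get l f q : Sm f -> inslab q ->
  continuous (uncurry4 (pdl l f)) q /\
  forall k, ex_derive (fun s => uncurry4 (pdl l f) (upd k q s)) (crd k q).
Proof.
  destruct q as [[[a b] c] t]. intros H Hq. destruct (H l a b c t Hq) as [H1 H2].
  split; [exact H1|]. intros k. apply (proj1 (ex_pd_upd k (pdl l f) (a,b,c,t))). apply H2.
Qed.

Lemma slab_near j k q u v : inslab q ->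
  Rabs (u - crd j q) < Rmin (tm q) (T - tm q) ->
  Rabs (v - crd k q) < Rmin (tm q) (T - tm q) ->
  inslab (upd j (upd k q v) u).
Proof.
  destruct q as [[[a b] c] t]. unfold inslab; simpl. intros Ht Hu Hv.
  assert (Hm1 := Rmin_l t (T - t)). assert (Hm2 := Rmin_r t (T - t)).
  destruct j as [|[|[|j]]]; destruct k as [|[|[|k]]]; simpl in *;
  try (split; lra);
  revert Hu Hv; unfold Rabs; destruct Rcase_abs; destruct Rcase_abs; intros; split; lra.
Qed.

Lemma continuous_upd2 j k q x y :
  continuous (fun z : R * R => upd j (upd k q (snd z)) (fst z)) (x, y).
Proof.
  destruct q as [[[a b] c] t].
  destruct j as [|[|[|j]]]; destruct k as [|[|[|k]]]; simpl;
  repeat first [ apply continuous_pair | apply continuous_id | apply continuous_const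
               | apply continuous_fst | apply continuous_snd ].
Qed.

Ltac updeq := match goal with NE : cls ?j <> cls ?k |- _ =>
  unfold cls in NE; clear -NE; repeat match goal with x := _ |- _ => subst x end;
  repeat match goal with x : prod (prod (prod R R) R) R |- _ => destruct x as [[[? ?] ?] ?] end; destruct j as [|[|[|j]]]; destruct k as [|[|[|k]]]; simpl; try reflexivity;
  exfalso; apply NE; lia end.

Lemma Schwarz_Sm j k f a b c t : Sm f -> 0 < t < T ->
  pd j (pd k f) a b c t = pd k (pd j f) a b c t.
Proof.
  intros Hf Ht.
  destruct (Nat.eq_dec (cls j) (cls k)) as [E|NE].
  { assert (Hjk : forall g, pd j g = pd k g) by (intro g; rewrite (pd_cls j g), (pd_cls k g), E; reflexivity).
    rewrite !Hjk. reflexivity. }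
  assert (NE' : cls k <> cls j) by (intro; apply NE; auto).
  set (q := (a, b, c, t)).
  assert (Hq : inslab q) by exact Ht.
  set (F := fun s r => uncurry4 f (upd j (upd k q r) s)).
  assert (L : pd j (pd k f) a b c t =
     Derive (fun s => Derive (fun r => F s r) (crd k q)) (crd j q)).
  { rewrite pd_upd. apply Derive_ext. intros s. rewrite pd_upd'.
    rewrite crd_upd_ne by assumption. apply Derive_ext. intros r. unfold F.
    rewrite upd_comm by assumption. reflexivity. }
  assert (R : pd k (pd j f) a b c t =
     Derive (fun r => Derive (fun s => F s r) (crd j q)) (crd k q)).
  { rewrite pd_upd. apply Derive_ext. intros r. rewrite pd_upd'.
    rewrite crd_upd_ne by assumption. apply Derive_ext. intros s. reflexivity. }
  rewrite L, R. clear L R.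
  assert (Fz1 : forall u v, (fun z => F z v) = fun z => uncurry4 f (upd j (upd j (upd k q v) u) z)).
  { intros u v. apply functional_extensionality. intros z. unfold F. now rewrite upd_upd. }
  assert (Fz2 : forall u v, (fun z => F u z) = fun z => uncurry4 f (upd k (upd j (upd k q v) u) z)).
  { intros u v. apply functional_extensionality. intros z. unfold F. f_equal. updeq. }
  assert (Fz3 : forall v, (fun z => Derive (fun r => F z r) v) =
                 fun z => uncurry4 (pd k f) (upd j (upd k q v) z)).
  { intros v. apply functional_extensionality. intros z. rewrite pd_upd'.
    replace (crd k (upd j (upd k q v) z)) with v by updeq.
    apply Derive_ext. intros r. unfold F. f_equal. updeq. }
  assert (Fz4 : forall u, (fun z => Derive (fun s => F s z) u) =
                 fun z => uncurry4 (pd j f) (upd k (upd j q u) z)).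
  { intros u. apply functional_extensionality. intros z. rewrite pd_upd'.
    replace (crd j (upd k (upd j q u) z)) with u by updeq.
    apply Derive_ext. intros s. unfold F. f_equal. updeq. }
  assert (Fz5 : forall u v, Derive (fun z => Derive (fun r => F z r) v) u =
      uncurry4 (pdl (j :: k :: nil) f) (upd j (upd k q v) u)).
  { intros u v. rewrite Fz3. simpl pdl. rewrite pd_upd'.
    replace (crd j (upd j (upd k q v) u)) with u by updeq.
    apply Derive_ext. intros z. f_equal. updeq. }
  assert (Fz6 : forall u v, Derive (fun z => Derive (fun s => F s z) u) v =
      uncurry4 (pdl (k :: j :: nil) f) (upd j (upd k q v) u)).
  { intros u v. rewrite Fz4. simpl pdl. rewrite pd_upd'.
    replace (crd k (upd j (upd k q v) u)) with v by updeq.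
    apply Derive_ext. intros z. f_equal. updeq. }
  assert (Hxy : upd j (upd k q (crd k q)) (crd j q) = q).
  { now rewrite !upd_crd. }
  assert (Hpos : 0 < Rmin (tm q) (T - tm q)).
  { unfold q; simpl. apply Rmin_pos; lra. }
  apply Schwarz.
  - exists (mkposreal _ Hpos). intros u v Hu Hv. simpl in Hu, Hv.
    assert (Hs := slab_near j k q u v Hq Hu Hv).
    set (q' := upd j (upd k q v) u) in *.
    repeat split.
    + destruct (Sm_get nil f q' Hf Hs) as [_ H]. specialize (H j).
      replace u with (crd j q') by updeq.
      eapply ex_derive_ext; [|exact H]. intros s. simpl. unfold F. f_equal. updeq.
    + destruct (Sm_get nil f q' Hf Hs) as [_ H]. specialize (H k).
      replace v with (crd k q') by updeq.
      eapply ex_derive_ext; [|exact H]. intros s. simpl. unfold F. f_equal. updeq.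
    + rewrite Fz3.
      destruct (Sm_get (k :: nil) f q' Hf Hs) as [_ H]. specialize (H j).
      replace u with (crd j q') by updeq.
      eapply ex_derive_ext; [|exact H]. intros s. simpl. f_equal. updeq.
    + rewrite Fz4.
      destruct (Sm_get (j :: nil) f q' Hf Hs) as [_ H]. specialize (H k).
      replace v with (crd k q') by updeq.
      eapply ex_derive_ext; [|exact H]. intros s. simpl. f_equal. updeq.
  - apply continuity_2d_pt_filterlim.
    apply (filterlim_ext (fun z => uncurry4 (pdl (j :: k :: nil) f) (upd j (upd k q (snd z)) (fst z)))).
    { intros z. symmetry. apply Fz5. }
    rewrite Fz5, Hxy.
    assert (C : continuous (fun z : R * R => uncurry4 (pdl (j :: k :: nil) f) (upd j (upd k q (snd z)) (fst z))) (crd j q, crd k q)).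
    { apply (continuous_comp (fun z : R * R => upd j (upd k q (snd z)) (fst z))).
      + apply continuous_upd2.
      + cbn [fst snd]. rewrite Hxy. apply (proj1 (Sm_get _ f q Hf Hq)). }
    unfold continuous in C. cbn [fst snd] in C. rewrite Hxy in C. exact C.
  - apply continuity_2d_pt_filterlim.
    apply (filterlim_ext (fun z => uncurry4 (pdl (k :: j :: nil) f) (upd j (upd k q (snd z)) (fst z)))).
    { intros z. symmetry. apply Fz6. }
    rewrite Fz6, Hxy.
    assert (C : continuous (fun z : R * R => uncurry4 (pdl (k :: j :: nil) f) (upd j (upd k q (snd z)) (fst z))) (crd j q, crd k q)).
    { apply (continuous_comp (fun z : R * R => upd j (upd k q (snd z)) (fst z))).
      + apply continuous_upd2.
      + cbn [fst snd]. rewrite Hxy. apply (proj1 (Sm_get _ f q Hf Hq)). }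
    unfold continuous in C. cbn [fst snd] in C. rewrite Hxy in C. exact C.
Qed.

End SmoothSec.


Arguments pd : simpl never.

Inductive ex : Type :=
| EJ (f : fld) (l : list nat)
| EC (r : R)
| EA (x y : ex)
| EM (x y : ex)
| ERho | EIR | ELR | EF0 | EF1 | EF2.

Fixpoint ins (k : nat) (l : list nat) : list nat :=
  match l with
  | nil => k :: nil
  | m :: l' => if Nat.leb k m then k :: m :: l' else m :: ins k l'
  end.

Section Refl.
Variables (T rho1 : R) (F : R -> R) (phi : fld).

Definition Bc := (rho1 - rho2) / 2.

Fixpoint den (E : ex) : fld :=
  match E with
  | EJ f l => pdl l f
  | EC r => fun _ _ _ _ => r
  | EA x y => fun a b c t => den x a b c t + den y a b c t
  | EM x y => fun a b c t => den x a b c t * den y a b c t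
  | ERho => dens rho1 phi
  | EIR => fun a b c t => / dens rho1 phi a b c t
  | ELR => fun a b c t => ln (dens rho1 phi a b c t)
  | EF0 => fun a b c t => F (phi a b c t)
  | EF1 => fun a b c t => Derive F (phi a b c t)
  | EF2 => fun a b c t => Derive (Derive F) (phi a b c t)
  end.

Fixpoint deriv (k : nat) (E : ex) : ex :=
  match E with
  | EJ f l => EJ f (ins k l)
  | EC _ => EC 0
  | EA x y => EA (deriv k x) (deriv k y)
  | EM x y => EA (EM (deriv k x) y) (EM x (deriv k y))
  | ERho => EM (EC Bc) (EJ phi (k :: nil))
  | EIR => EM (EM (EC (- Bc)) (EJ phi (k :: nil))) (EM EIR EIR)
  | ELR => EM (EM (EC Bc) (EJ phi (k :: nil))) EIR
  | EF0 => EM EF1 (EJ phi (k :: nil))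
  | EF1 => EM EF2 (EJ phi (k :: nil))
  | EF2 => EC 0
  end.

Fixpoint wf (E : ex) : Prop :=
  match E with
  | EJ f _ => Sm T f
  | EA x y => wf x /\ wf y
  | EM x y => wf x /\ wf y
  | _ => True
  end.

Fixpoint noF2 (E : ex) : bool :=
  match E with
  | EA x y => noF2 x && noF2 y
  | EM x y => noF2 x && noF2 y
  | EF2 => false
  | _ => true
  end.

Hypothesis hphi : Sm T phi.
Hypothesis hrho1 : 0 < rho1 < rho2.
Hypothesis hF : C2_on_m11 F.
Hypothesis hrange : forall a b c t, 0 < t < T -> -1 < phi a b c t < 1.

Lemma dens_pos a b c t : 0 < t < T -> 0 < dens rho1 phi a b c t.
Proof.
  intros Ht. specialize (hrange a b c t Ht). unfold dens, rho2 in *. nra.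
Qed.

Lemma pd_feq m g h a b c t :
  (forall a b c t, 0 < t < T -> g a b c t = h a b c t) -> 0 < t < T ->
  pd m g a b c t = pd m h a b c t.
Proof.
  intros H Ht. destruct m as [|[|[|m]]]; unfold pd.
  - apply Derive_ext. intros s. apply H, Ht.
  - apply Derive_ext. intros s. apply H, Ht.
  - apply Derive_ext. intros s. apply H, Ht.
  - apply Derive_ext_loc.
    assert (Hp : 0 < Rmin (t - 0) (T - t)) by (apply Rmin_pos; lra).
    exists (mkposreal _ Hp). intros s Hs. apply H.
    cbv [ball] in Hs; simpl in Hs; cbv [AbsRing_ball abs minus plus opp] in Hs; simpl in Hs.
    assert (H1 := Rmin_l (t - 0) (T - t)). assert (H2 := Rmin_r (t - 0) (T - t)).
    revert Hs; unfold Rabs; destruct Rcase_abs; intros; lra.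
Qed.

Lemma pd_ins k l f a b c t : Sm T f -> 0 < t < T ->
  pd k (pdl l f) a b c t = pdl (ins k l) f a b c t.
Proof.
  intros Hf. revert a b c t. induction l as [|m l IH]; intros a b c t Ht; simpl; [reflexivity|].
  destruct (Nat.leb k m); [reflexivity|].
  simpl. rewrite (Schwarz_Sm T k m (pdl l f)) by (try apply Sm_pdl; auto).
  apply pd_feq; auto.
Qed.

Lemma unc_mult (X Y : fld) p :
  uncurry4 (fun a b c t => X a b c t * Y a b c t) p = uncurry4 X p * uncurry4 Y p.
Proof. destruct p as [[[? ?] ?] ?]; reflexivity. Qed.
Lemma unc_plus (X Y : fld) p :
  uncurry4 (fun a b c t => X a b c t + Y a b c t) p = uncurry4 X p + uncurry4 Y p.
Proof. destruct p as [[[? ?] ?] ?]; reflexivity. Qed.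
Lemma unc_comp (h : R -> R) (X : fld) p :
  uncurry4 (fun a b c t => h (X a b c t)) p = h (uncurry4 X p).
Proof. destruct p as [[[? ?] ?] ?]; reflexivity. Qed.
Lemma unc_const (r : R) p : uncurry4 (fun _ _ _ _ => r) p = r.
Proof. destruct p as [[[? ?] ?] ?]; reflexivity. Qed.

Lemma dens_unc p : uncurry4 (dens rho1 phi) p =
  rho1 * (1 + uncurry4 phi p) / 2 + rho2 * (1 - uncurry4 phi p) / 2.
Proof. destruct p as [[[? ?] ?] ?]; reflexivity. Qed.

Lemma inslab_pos q : inslab T q -> 0 < uncurry4 (dens rho1 phi) q.
Proof. destruct q as [[[a b] c] t]. apply dens_pos. Qed.
Lemma inslab_range q : inslab T q -> -1 < uncurry4 phi q < 1.
Proof. destruct q as [[[a b] c] t]. apply hrange. Qed.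

Lemma phi_line k q : inslab T q ->
  is_derive (fun s => uncurry4 phi (upd k q s)) (crd k q) (uncurry4 (pd k phi) q).
Proof.
  intros Hq. destruct (Sm_get T nil phi q hphi Hq) as [_ H].
  rewrite pd_upd'. apply Derive_correct, H.
Qed.

Lemma comp_line (h : R -> R) dh (X : fld) k q dX :
  is_derive h (uncurry4 X q) dh ->
  is_derive (fun s => uncurry4 X (upd k q s)) (crd k q) dX ->
  is_derive (fun s => uncurry4 (fun a b c t => h (X a b c t)) (upd k q s)) (crd k q) (dX * dh).
Proof.
  intros H1 H2. apply (is_derive_ext (fun s => h (uncurry4 X (upd k q s)))).
  { intros s; now rewrite unc_comp. }
  apply (is_derive_comp h (fun s => uncurry4 X (upd k q s))); auto.
  rewrite upd_crd. exact H1.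
Qed.

Lemma deriv_correct E k q : wf E -> noF2 E = true -> inslab T q ->
  is_derive (fun s => uncurry4 (den E) (upd k q s)) (crd k q) (uncurry4 (den (deriv k E)) q).
Proof.
  intros Hw Hn Hq. induction E as [f l|r|x IHx y IHy|x IHx y IHy| | | | | |]; simpl in Hw, Hn |- *.
  - destruct (Sm_get T l f q Hw Hq) as [_ H].
    replace (uncurry4 (pdl (ins k l) f) q) with (uncurry4 (pd k (pdl l f)) q).
    + rewrite pd_upd'. apply Derive_correct, H.
    + destruct q as [[[a b] c] t]. simpl. apply pd_ins; auto.
  - rewrite unc_const. apply (is_derive_ext (fun _ => r)). { intros s; now rewrite unc_const. }
    exact (is_derive_const (K := R_AbsRing) (V := R_NormedModule) r _).
  - apply andb_prop in Hn. destruct Hn, Hw.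
    rewrite unc_plus. apply (is_derive_ext (fun s => uncurry4 (den x) (upd k q s) + uncurry4 (den y) (upd k q s))).
    { intros s; now rewrite unc_plus. }
    apply (is_derive_plus (V := R_NormedModule)); auto.
  - apply andb_prop in Hn. destruct Hn, Hw.
    rewrite unc_plus, !unc_mult. apply (is_derive_ext (fun s => uncurry4 (den x) (upd k q s) * uncurry4 (den y) (upd k q s))).
    { intros s; now rewrite unc_mult. }
    replace (uncurry4 (den (deriv k x)) q * uncurry4 (den y) q + uncurry4 (den x) q * uncurry4 (den (deriv k y)) q)
      with (plus (mult (uncurry4 (den (deriv k x)) q) (uncurry4 (den y) (upd k q (crd k q))))
                 (mult (uncurry4 (den x) (upd k q (crd k q))) (uncurry4 (den (deriv k y)) q))).
    2:{ rewrite upd_crd. reflexivity. }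
    apply (is_derive_mult (K := R_AbsRing)); auto. intros; apply Rmult_comm.
  -
    rewrite unc_mult, unc_const. simpl pdl.
    apply (is_derive_ext (fun s => uncurry4 (fun a b c t => (fun x => rho1 * (1 + x) / 2 + rho2 * (1 - x) / 2) (phi a b c t)) (upd k q s))).
    { intros s. destruct (upd k q s) as [[[? ?] ?] ?]. reflexivity. }
    replace (Bc * uncurry4 (pd k phi) q) with (uncurry4 (pd k phi) q * ((rho1 - rho2) / 2)) by (unfold Bc; ring).
    apply (comp_line (fun x => rho1 * (1 + x) / 2 + rho2 * (1 - x) / 2)); [|apply phi_line; auto].
    auto_derive; [auto|]. unfold rho2. field.
  -
    apply (is_derive_ext (fun s => uncurry4 (fun a b c t => (fun x => / (rho1 * (1 + x) / 2 + rho2 * (1 - x) / 2)) (phi a b c t)) (upd k q s))).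
    { intros s. destruct (upd k q s) as [[[? ?] ?] ?]. reflexivity. }
    assert (Hp := inslab_pos q Hq). rewrite dens_unc in Hp.
    match goal with |- is_derive _ _ ?v => replace v
      with (uncurry4 (pd k phi) q * (- ((rho1 - rho2) / 2) / (rho1 * (1 + uncurry4 phi q) / 2 + rho2 * (1 - uncurry4 phi q) / 2) ^ 2)) end.
    2:{ destruct q as [[[? ?] ?] ?]. cbn [uncurry4] in *. unfold Bc, dens. field. lra. }
    apply (comp_line (fun x => / (rho1 * (1 + x) / 2 + rho2 * (1 - x) / 2))); [|apply phi_line; auto].
    auto_derive; [lra|]. field. lra.
  -
    apply (is_derive_ext (fun s => uncurry4 (fun a b c t => (fun x => ln (rho1 * (1 + x) / 2 + rho2 * (1 - x) / 2)) (phi a b c t)) (upd k q s))).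
    { intros s. destruct (upd k q s) as [[[? ?] ?] ?]. reflexivity. }
    assert (Hp := inslab_pos q Hq). rewrite dens_unc in Hp.
    match goal with |- is_derive _ _ ?v => replace v
      with (uncurry4 (pd k phi) q * (((rho1 - rho2) / 2) / (rho1 * (1 + uncurry4 phi q) / 2 + rho2 * (1 - uncurry4 phi q) / 2))) end.
    2:{ destruct q as [[[? ?] ?] ?]. cbn [uncurry4] in *. unfold Bc, dens. field. lra. }
    apply (comp_line (fun x => ln (rho1 * (1 + x) / 2 + rho2 * (1 - x) / 2))); [|apply phi_line; auto].
    auto_derive; [lra|]. field. lra.
  -
    match goal with |- is_derive _ _ ?v => replace v with (uncurry4 (pd k phi) q * Derive F (uncurry4 phi q)) end.
    2:{ destruct q as [[[? ?] ?] ?]. cbn [uncurry4]. simpl. ring. }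
    apply (comp_line F); [|apply phi_line; auto].
    destruct (hF _ (inslab_range q Hq)) as [H1 _]. apply Derive_correct, H1.
  - match goal with |- is_derive _ _ ?v => replace v with (uncurry4 (pd k phi) q * Derive (Derive F) (uncurry4 phi q)) end.
    2:{ destruct q as [[[? ?] ?] ?]. cbn [uncurry4]. simpl. ring. }
    apply (comp_line (Derive F)); [|apply phi_line; auto].
    destruct (hF _ (inslab_range q Hq)) as [_ [H1 _]]. apply Derive_correct, H1.
  - discriminate.
Qed.


Lemma cont_comp_phi (h : R -> R) q : inslab T q -> continuous h (uncurry4 phi q) ->
  continuous (uncurry4 (fun a b c t => h (phi a b c t))) q.
Proof.
  intros Hq Hh.
  replace (uncurry4 (fun a b c t => h (phi a b c t))) with (fun p => h (uncurry4 phi p)).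
  2:{ apply functional_extensionality; intros p; now rewrite unc_comp. }
  apply (continuous_comp (uncurry4 phi) h); auto.
  apply (proj1 (Sm_get T nil phi q hphi Hq)).
Qed.

Lemma den_cont E q : wf E -> inslab T q -> continuous (uncurry4 (den E)) q.
Proof.
  intros Hw Hq. assert (Hp := inslab_pos q Hq). rewrite dens_unc in Hp.
  assert (Hr := inslab_range q Hq).
  induction E as [f l|r|x IHx y IHy|x IHx y IHy| | | | | |]; simpl in Hw |- *.
  - apply (proj1 (Sm_get T l f q Hw Hq)).
  - replace (uncurry4 (fun _ _ _ _ => r)) with (fun _ : P4 => r).
    2:{ apply functional_extensionality; intros p; now rewrite unc_const. }
    apply continuous_const.
  - destruct Hw. replace (uncurry4 (fun a b c t => den x a b c t + den y a b c t)) with (fun p => uncurry4 (den x) p + uncurry4 (den y) p).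
    2:{ apply functional_extensionality; intros p; now rewrite unc_plus. }
    apply (continuous_plus (V := R_NormedModule)); auto.
  - destruct Hw. replace (uncurry4 (fun a b c t => den x a b c t * den y a b c t)) with (fun p => uncurry4 (den x) p * uncurry4 (den y) p).
    2:{ apply functional_extensionality; intros p; now rewrite unc_mult. }
    apply (continuous_mult (K := R_AbsRing)); auto.
  - apply (cont_comp_phi (fun x => rho1 * (1 + x) / 2 + rho2 * (1 - x) / 2)); auto.
    apply (ex_derive_continuous (K := R_AbsRing) (V := R_NormedModule)). auto_derive. auto.
  - apply (cont_comp_phi (fun x => / (rho1 * (1 + x) / 2 + rho2 * (1 - x) / 2))); auto.
    apply (ex_derive_continuous (K := R_AbsRing) (V := R_NormedModule)). auto_derive. lra.
  - apply (cont_comp_phi (fun x => ln (rho1 * (1 + x) / 2 + rho2 * (1 - x) / 2))); auto.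
    apply (ex_derive_continuous (K := R_AbsRing) (V := R_NormedModule)). auto_derive. lra.
  - apply (cont_comp_phi F); auto. apply (ex_derive_continuous (K := R_AbsRing) (V := R_NormedModule)). apply (hF _ Hr).
  - apply (cont_comp_phi (Derive F)); auto. apply (ex_derive_continuous (K := R_AbsRing) (V := R_NormedModule)). apply (hF _ Hr).
  - apply (cont_comp_phi (Derive (Derive F))); auto. apply (hF _ Hr).
Qed.

Lemma wf_deriv E k : wf E -> wf (deriv k E).
Proof. induction E; simpl; intuition. Qed.

Lemma pd_den E k a b c t : wf E -> noF2 E = true -> 0 < t < T ->
  pd k (den E) a b c t = den (deriv k E) a b c t.
Proof.
  intros Hw Hn Ht. assert (H := deriv_correct E k (a,b,c,t) Hw Hn Ht).
  rewrite pd_upd. apply is_derive_unique in H. exact H.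
Qed.

Lemma expd_den E k a b c t : wf E -> noF2 E = true -> 0 < t < T ->
  ex_pd k (den E) a b c t.
Proof.
  intros Hw Hn Ht. assert (H := deriv_correct E k (a,b,c,t) Hw Hn Ht).
  apply (proj2 (ex_pd_upd k (den E) (a,b,c,t))). eexists. exact H.
Qed.

Lemma pd2_den E j k a b c t : wf E -> noF2 E = true -> noF2 (deriv k E) = true -> 0 < t < T ->
  pd j (pd k (den E)) a b c t = den (deriv j (deriv k E)) a b c t.
Proof.
  intros Hw Hn Hn2 Ht. rewrite <- pd_den; auto using wf_deriv.
  apply pd_feq; auto. intros. apply pd_den; auto.
Qed.

End Refl.


Lemma ballR (x e y : R) : ball x e y <-> Rabs (y - x) < e.
Proof. reflexivity. Qed.

Lemma cont_slice {X : UniformSpace} (f : X -> R -> R) x c :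
  continuous (fun z : X * R => f (fst z) (snd z)) (x, c) -> continuous (f x) c.
Proof.
  intros H. apply (continuous_comp (fun s : R => (x, s)) (fun z : X * R => f (fst z) (snd z)) c); auto.
  apply continuous_pair; [apply continuous_const|apply continuous_id].
Qed.

Definition openX {X : UniformSpace} (V : X -> Prop) := forall x, V x -> locally x V.

Lemma PC {X : UniformSpace} (f : X -> R -> R) (x0 : X) :
  locally x0 (fun x => forall c, 0 <= c <= 1 -> continuous (fun z : X * R => f (fst z) (snd z)) (x, c)) ->
  continuous (fun x => RInt (f x) 0 1) x0 /\ ex_RInt (f x0) 0 1.
Proof.
  intros HU.
  assert (Hex : forall x, (forall c, 0 <= c <= 1 -> continuous (fun z : X * R => f (fst z) (snd z)) (x, c)) -> ex_RInt (f x) 0 1).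
  { intros x Hx. apply (ex_RInt_continuous (V := R_CompleteNormedModule)). intros z Hz. rewrite Rmin_left, Rmax_right in Hz by lra.
    apply cont_slice, Hx, Hz. }
  assert (H0 : forall c, 0 <= c <= 1 -> continuous (fun z : X * R => f (fst z) (snd z)) (x0, c)).
  { apply (locally_singleton _ _ HU). }
  split; [|apply Hex, H0].
  apply (filterlim_locally (F := locally x0)). intros eps.
  assert (He : 0 < eps / 4) by (destruct eps; simpl; lra).
  set (e4 := mkposreal _ He).
  assert (Hd : forall c, exists d : posreal, 0 <= c <= 1 ->
     forall z : X * R, ball (x0, c) d z -> Rabs (f (fst z) (snd z) - f x0 c) < e4).
  { intros c. destruct (Rle_dec 0 c) as [h1|h1]; [destruct (Rle_dec c 1) as [h2|h2]|].
    - specialize (H0 c (conj h1 h2)).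
      assert (Hl := proj1 (filterlim_locally (F := locally (x0, c)) _ _) H0 e4).
      destruct Hl as [d Hd]. exists d. intros _ z Hz. apply Hd, Hz.
    - exists (mkposreal 1 Rlt_0_1). intros [_ h]. lra.
    - exists (mkposreal 1 Rlt_0_1). intros [h _]. lra. }
  set (delta := fun c => proj1_sig (constructive_indefinite_description _ (Hd c))).
  assert (Hdelta : forall c, 0 <= c <= 1 ->
     forall z : X * R, ball (x0, c) (delta c) z -> Rabs (f (fst z) (snd z) - f x0 c) < e4).
  { intros c. unfold delta. destruct (constructive_indefinite_description _ (Hd c)) as [d Hd']. simpl. exact Hd'. }
  destruct (compactness_value_1d 0 1 delta) as [d Hcomp].
  destruct HU as [r0 HU].
  assert (Hm : 0 < Rmin d r0) by (apply Rmin_pos; [destruct d|destruct r0]; simpl; lra).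
  exists (mkposreal _ Hm). intros x Hx. simpl in Hx.
  assert (Hxr : ball x0 r0 x) by (eapply ball_le; [apply Rmin_r|exact Hx]).
  assert (Hxd : ball x0 d x) by (eapply ball_le; [apply Rmin_l|exact Hx]).
  specialize (HU x Hxr).
  assert (Hpt : forall c, 0 <= c <= 1 -> Rabs (f x c - f x0 c) <= 2 * e4).
  { intros c Hc. apply Rnot_lt_le. intros Hlt.
    apply (Hcomp c Hc). intros [c' [Hc' [Hcc' Hdc']]].
    assert (A1 := Hdelta c' Hc' (x, c)).
    assert (A2 := Hdelta c' Hc' (x0, c)).
    simpl in A1, A2.
    assert (B1 : ball (x0, c') (delta c') (x, c)).
    { split; simpl. eapply ball_le; [exact Hdc'|exact Hxd].
      apply ballR. exact Hcc'. }
    assert (B2 : ball (x0, c') (delta c') (x0, c)).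
    { split; simpl. apply ball_center.
      apply ballR. exact Hcc'. }
    specialize (A1 B1). specialize (A2 B2).
    assert (Rabs (f x c - f x0 c) <= Rabs (f x c - f x0 c') + Rabs (f x0 c - f x0 c')).
    { replace (f x c - f x0 c) with ((f x c - f x0 c') - (f x0 c - f x0 c')) by ring.
      unfold Rminus at 1. eapply Rle_trans; [apply Rabs_triang|]. rewrite Rabs_Ropp. lra. }
    simpl in *. lra. }
  assert (Ex := Hex x HU). assert (Ex0 := Hex x0 H0).
  apply ballR.
  replace (RInt (f x) 0 1 - RInt (f x0) 0 1) with (RInt (fun c => f x c - f x0 c) 0 1).
  2:{ apply (RInt_minus (V := R_CompleteNormedModule)); auto. }
  eapply Rle_lt_trans.
  { apply abs_RInt_le_const with (M := 2 * e4); [lra| |].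
    - apply (ex_RInt_minus (V := R_NormedModule)); auto.
    - intros c Hc. apply Hpt, Hc. }
  simpl. lra.
Qed.

Lemma slice_locally {Y : UniformSpace} (y : Y) (t : R) (P : Y * R -> Prop) :
  locally (y, t) P -> locally t (fun t' => P (y, t')).
Proof.
  intros [e He]. exists e. intros t' Ht'. apply He. split; [apply ball_center|exact Ht'].
Qed.

Lemma lift_locally {Y : UniformSpace} (t s : R) (P : R -> Prop) :
  locally t P -> locally (t, s) (fun z : R * R => P (fst z)).
Proof.
  intros [e He]. exists e. intros [u v] [Hu Hv]. apply He, Hu.
Qed.

Lemma levelD {Y : UniformSpace} (K K' : Y -> R -> R -> R) (U : Y -> R -> Prop) :
  (forall y t, U y t -> locally (y, t) (fun z : Y * R => U (fst z) (snd z))) ->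
  (forall y t s, U y t -> is_derive (fun t => K y t s) t (K' y t s)) ->
  (forall y t s, U y t -> continuous (fun z : Y * R * R => K (fst (fst z)) (snd (fst z)) (snd z)) (y, t, s)) ->
  (forall y t s, U y t -> continuous (fun z : Y * R * R => K' (fst (fst z)) (snd (fst z)) (snd z)) (y, t, s)) ->
  forall y t, U y t ->
    is_derive (fun t => RInt (K y t) 0 1) t (RInt (K' y t) 0 1)
    /\ continuous (fun z : Y * R => RInt (K (fst z) (snd z)) 0 1) (y, t)
    /\ continuous (fun z : Y * R => RInt (K' (fst z) (snd z)) 0 1) (y, t).
Proof.
  intros HU Hd HK HK' y t Hyt.
  assert (Hloc := HU y t Hyt).
  assert (PCK := PC (fun z : Y * R => K (fst z) (snd z)) (y, t)).
  assert (PCK' := PC (fun z : Y * R => K' (fst z) (snd z)) (y, t)).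
  destruct PCK as [C1 _].
  { apply (fun HH => filter_imp _ _ HH Hloc). intros [y' t'] H' c _. apply (HK y' t' c H'). }
  destruct PCK' as [C2 _].
  { apply (fun HH => filter_imp _ _ HH Hloc). intros [y' t'] H' c _. apply (HK' y' t' c H'). }
  split; [|split; assumption].
  assert (Hl1 := slice_locally y t _ Hloc). simpl in Hl1.
  assert (Hder := is_derive_RInt_param (fun t s => K y t s) 0 1 t).
  eapply is_derive_ext; [intros; reflexivity|].
  replace (RInt (K' y t) 0 1) with (RInt (fun s => Derive (fun u => K y u s) t) 0 1).
  2:{ apply RInt_ext. intros s _. apply is_derive_unique, Hd, Hyt. }
  apply Hder.
  - apply (fun HH => filter_imp _ _ HH Hl1). intros t' Ht' s _. eexists. apply Hd, Ht'.
  - intros s _. apply continuity_2d_pt_filterlim.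
    apply (filterlim_ext_loc (fun z : R * R => K' y (fst z) (snd z))).
    { apply (fun HH => filter_imp _ _ HH (lift_locally (Y := Y) t s _ Hl1)). intros [u v] Hu. simpl in Hu |- *.
      symmetry. apply is_derive_unique, Hd, Hu. }
    simpl. replace (Derive (fun z : R => K y z s) t) with (K' y t s) by (symmetry; apply is_derive_unique, Hd, Hyt).
    apply (continuous_comp (fun z : R * R => (y, fst z, snd z)) (fun z : Y * R * R => K' (fst (fst z)) (snd (fst z)) (snd z))).
    + repeat first [ apply continuous_pair | apply continuous_const | apply continuous_fst | apply continuous_snd ].
    + apply HK', Hyt.
  - apply (fun HH => filter_imp _ _ HH Hl1). intros t' Ht'.
    apply (ex_RInt_continuous (V := R_CompleteNormedModule)). intros z Hz.
    apply (cont_slice (fun z : Y * R => K (fst z) (snd z)) (y, t') z).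
    apply (HK y t' z Ht').
Qed.

Ltac cproj := repeat (match goal with
 | |- continuous (fun _ => (_, _)) _ => apply continuous_pair
 | |- continuous (pair ?u) ?p => apply (continuous_pair (fun _ => u) (fun z => z) p)
 | |- continuous (fun _ => ?c) _ => apply continuous_const
 | |- continuous (fun z => z) _ => apply continuous_id
 | |- continuous (fun z => fst z) _ => cbn [fst snd]; apply continuous_fst
 | |- continuous (fun z => snd z) _ => cbn [fst snd]; apply continuous_snd
 | |- continuous (fun z => fst (@?G z)) ?p => apply (continuous_comp G fst p)
 | |- continuous (fun z => snd (@?G z)) ?p => apply (continuous_comp G snd p)
 | |- continuous fst _ => cbn [fst snd]; apply continuous_fst
 | |- continuous snd _ => cbn [fst snd]; apply continuous_snd
 end).

Lemma slab_open {Y : UniformSpace} (T : R) (y : Y) (t : R) : 0 < t < T ->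
  locally (y, t) (fun z : Y * R => 0 < snd z < T).
Proof.
  intros Ht. assert (Hp : 0 < Rmin t (T - t)) by (apply Rmin_pos; lra).
  exists (mkposreal _ Hp). intros [y' t'] [_ H]. apply ballR in H. simpl in H |- *.
  apply Rabs_def2 in H.
  assert (H1 := Rmin_l t (T - t)). assert (H2 := Rmin_r t (T - t)). unfold minus, plus, opp in H; simpl in H. lra.
Qed.

Lemma DInt3 (T : R) (g : fld) :
  (forall a b c t, 0 < t < T -> continuous (uncurry4 g) (a, b, c, t) /\
       continuous (uncurry4 (pd 3 g)) (a, b, c, t) /\ ex_pd 3 g a b c t) ->
  forall t, 0 < t < T ->
  is_derive (fun t => Int3 (fun a b c => g a b c t)) t (Int3 (fun a b c => pd 3 g a b c t)).
Proof.
  intros Hg.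
  set (K1 := fun (y : R * R) t c => g (fst y) (snd y) c t).
  set (K1' := fun (y : R * R) t c => pd 3 g (fst y) (snd y) c t).
  assert (L1 := levelD K1 K1' (fun _ t => 0 < t < T)).
  assert (R1 : forall y t, 0 < t < T ->
    is_derive (fun t => RInt (K1 y t) 0 1) t (RInt (K1' y t) 0 1)
    /\ continuous (fun z : (R * R) * R => RInt (K1 (fst z) (snd z)) 0 1) (y, t)
    /\ continuous (fun z : (R * R) * R => RInt (K1' (fst z) (snd z)) 0 1) (y, t)).
  { apply L1.
    - intros y t Ht. apply slab_open, Ht.
    - intros [a b] t c Ht. unfold K1, K1'; simpl. destruct (Hg a b c t Ht) as [_ [_ H]].
      apply Derive_correct, H.
    - intros [a b] t c Ht. unfold K1.
      apply (continuous_comp (fun z : R * R * R * R => (fst (fst (fst z)), snd (fst (fst z)), snd z, snd (fst z))) (uncurry4 g)).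
      + cproj.
      + apply (Hg a b c t Ht).
    - intros [a b] t c Ht. unfold K1'.
      apply (continuous_comp (fun z : R * R * R * R => (fst (fst (fst z)), snd (fst (fst z)), snd z, snd (fst z))) (uncurry4 (pd 3 g))).
      + cproj.
      + apply (Hg a b c t Ht). }
  clear L1.
  set (K2 := fun (a : R) t b => RInt (K1 (a, b) t) 0 1).
  set (K2' := fun (a : R) t b => RInt (K1' (a, b) t) 0 1).
  assert (R2 : forall y t, 0 < t < T ->
    is_derive (fun t => RInt (K2 y t) 0 1) t (RInt (K2' y t) 0 1)
    /\ continuous (fun z : R * R => RInt (K2 (fst z) (snd z)) 0 1) (y, t)
    /\ continuous (fun z : R * R => RInt (K2' (fst z) (snd z)) 0 1) (y, t)).
  { apply (levelD K2 K2' (fun _ t => 0 < t < T)).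
    - intros y t Ht. apply slab_open, Ht.
    - intros a t b Ht. apply (R1 (a, b) t Ht).
    - intros a t b Ht. unfold K2.
      apply (continuous_comp (fun z : R * R * R => (fst (fst z), snd z, snd (fst z))) (fun z : R * R * R => RInt (K1 (fst z) (snd z)) 0 1)).
      + cproj.
      + apply (R1 (a, b) t Ht).
    - intros a t b Ht. unfold K2'.
      apply (continuous_comp (fun z : R * R * R => (fst (fst z), snd z, snd (fst z))) (fun z : R * R * R => RInt (K1' (fst z) (snd z)) 0 1)).
      + cproj.
      + apply (R1 (a, b) t Ht). }
  set (K3 := fun (y : R) t a => RInt (K2 a t) 0 1).
  set (K3' := fun (y : R) t a => RInt (K2' a t) 0 1).
  assert (R3 : forall y t, 0 < t < T ->
    is_derive (fun t => RInt (K3 y t) 0 1) t (RInt (K3' y t) 0 1)).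
  { intros y0 t0 Ht0. apply (levelD K3 K3' (fun _ t => 0 < t < T)); auto.
    - intros y t Ht. apply slab_open, Ht.
    - intros y a t Ht. apply (R2 t a Ht).
    - intros y t a Ht. unfold K3.
      apply (continuous_comp (fun z : R * R * R => (snd z, snd (fst z))) (fun z : R * R => RInt (K2 (fst z) (snd z)) 0 1)).
      + cproj.
      + apply (R2 a t Ht).
    - intros y t a Ht. unfold K3'.
      apply (continuous_comp (fun z : R * R * R => (snd z, snd (fst z))) (fun z : R * R => RInt (K2' (fst z) (snd z)) 0 1)).
      + cproj.
      + apply (R2 a t Ht). }
  intros t Ht. exact (R3 0 t Ht).
Qed.

Definition C3 (h : R -> R -> R -> R) :=
  forall z : R * R * R, continuous (fun z : R * R * R => h (fst (fst z)) (snd (fst z)) (snd z)) z.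

Lemma C3_of_4 (g : fld) t : (forall a b c, continuous (uncurry4 g) (a, b, c, t)) ->
  C3 (fun a b c => g a b c t).
Proof.
  intros H [[a b] c].
  apply (continuous_comp (fun z : R * R * R => (fst (fst z), snd (fst z), snd z, t)) (uncurry4 g)).
  - cproj.
  - apply H.
Qed.

Lemma Int3_ex (h : R -> R -> R -> R) : C3 h ->
  (forall a b, ex_RInt (h a b) 0 1) /\
  (forall a, ex_RInt (fun b => RInt (h a b) 0 1) 0 1) /\
  ex_RInt (fun a => RInt (fun b => RInt (h a b) 0 1) 0 1) 0 1.
Proof.
  intros H.
  assert (L1 : forall y : R * R, continuous (fun y : R * R => RInt (h (fst y) (snd y)) 0 1) y /\ ex_RInt (h (fst y) (snd y)) 0 1).
  { intros y. apply (PC (fun y : R * R => h (fst y) (snd y)) y). apply filter_forall. intros x c _. apply H. }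
  assert (L2 : forall a : R, continuous (fun a => RInt (fun b => RInt (h a b) 0 1) 0 1) a /\ ex_RInt (fun b => RInt (h a b) 0 1) 0 1).
  { intros a. apply (PC (fun a b => RInt (h a b) 0 1) a). apply filter_forall. intros x c _.
    apply (L1 (x, c)). }
  split; [intros a b; apply (L1 (a, b))|]. split; [intros a; apply (L2 a)|].
  apply (ex_RInt_continuous (V := R_CompleteNormedModule)). intros z _. apply L2.
Qed.

Lemma Int3_ext (h1 h2 : R -> R -> R -> R) :
  (forall a b c, h1 a b c = h2 a b c) -> Int3 h1 = Int3 h2.
Proof.
  intros H. unfold Int3. apply RInt_ext; intros a _. apply RInt_ext; intros b _.
  apply RInt_ext; intros c _. apply H.
Qed.

Lemma Int3_plus (h1 h2 : R -> R -> R -> R) : C3 h1 -> C3 h2 ->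
  Int3 (fun a b c => h1 a b c + h2 a b c) = Int3 h1 + Int3 h2.
Proof.
  intros H1 H2. destruct (Int3_ex h1 H1) as [A1 [B1 C1]]. destruct (Int3_ex h2 H2) as [A2 [B2 C2]].
  unfold Int3.
  rewrite <- (RInt_plus (V := R_CompleteNormedModule)) by auto. apply RInt_ext; intros a _.
  rewrite <- (RInt_plus (V := R_CompleteNormedModule)) by auto. apply RInt_ext; intros b _.
  rewrite <- (RInt_plus (V := R_CompleteNormedModule)) by auto. reflexivity.
Qed.

Lemma Int3_scal (k : R) (h : R -> R -> R -> R) : C3 h ->
  Int3 (fun a b c => k * h a b c) = k * Int3 h.
Proof.
  intros H. destruct (Int3_ex h H) as [A [B C]].
  unfold Int3.
  rewrite <- (RInt_scal (V := R_CompleteNormedModule)) by auto. apply RInt_ext; intros a _.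
  rewrite <- (RInt_scal (V := R_CompleteNormedModule)) by auto. apply RInt_ext; intros b _.
  rewrite <- (RInt_scal (V := R_CompleteNormedModule)) by auto. reflexivity.
Qed.

Lemma C3_plus h1 h2 : C3 h1 -> C3 h2 -> C3 (fun a b c => h1 a b c + h2 a b c).
Proof. intros H1 H2 z. apply (continuous_plus (V := R_NormedModule)); auto. Qed.

Lemma C3_scal k h : C3 h -> C3 (fun a b c => k * h a b c).
Proof. intros H z. apply (continuous_mult (K := R_AbsRing)); [apply continuous_const|auto]. Qed.

Lemma RInt_zero : RInt (fun _ : R => 0) 0 1 = 0.
Proof. rewrite RInt_const. unfold scal; simpl. unfold mult; simpl. ring. Qed.

Lemma RInt_Derive_per (f : R -> R) :
  (forall x, ex_derive f x) -> (forall x, continuous (Derive f) x) -> f 1 = f 0 ->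
  RInt (Derive f) 0 1 = 0.
Proof.
  intros H1 H2 H3. rewrite RInt_Derive; [rewrite H3; apply Rplus_opp_r | intros; apply H1 | intros; apply H2].
Qed.

Lemma Int3_div2 (G : fld) t :
  (forall a b c, continuous (uncurry4 (pd 2 G)) (a, b, c, t) /\ ex_pd 2 G a b c t) ->
  (forall a b c, G a b (c + 1) t = G a b c t) ->
  Int3 (fun a b c => pd 2 G a b c t) = 0.
Proof.
  intros HG Hp. unfold Int3.
  transitivity (RInt (fun _ : R => RInt (fun _ : R => 0) 0 1) 0 1).
  2:{ rewrite !RInt_zero. reflexivity. }
  apply RInt_ext; intros a _. apply RInt_ext; intros b _.
  apply (RInt_Derive_per (fun s => G a b s t)).
  - intros x. apply (HG a b x).
  - intros x. apply (continuous_comp (fun s : R => (a, b, s, t)) (uncurry4 (pd 2 G))).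
    + cproj.
    + apply (HG a b x).
  - replace 1 with (0 + 1) at 1 by ring. apply Hp.
Qed.

Lemma Int3_div1 (G : fld) t :
  (forall a b c, continuous (uncurry4 G) (a, b, c, t) /\
     continuous (uncurry4 (pd 1 G)) (a, b, c, t) /\ ex_pd 1 G a b c t) ->
  (forall a b c, G a (b + 1) c t = G a b c t) ->
  Int3 (fun a b c => pd 1 G a b c t) = 0.
Proof.
  intros HG Hp. unfold Int3.
  set (K := fun (a : R) b c => G a b c t).
  set (K' := fun (a : R) b c => pd 1 G a b c t).
  assert (L : forall a b,
    is_derive (fun b => RInt (K a b) 0 1) b (RInt (K' a b) 0 1)
    /\ continuous (fun z : R * R => RInt (K (fst z) (snd z)) 0 1) (a, b)
    /\ continuous (fun z : R * R => RInt (K' (fst z) (snd z)) 0 1) (a, b)).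
  { intros a b. apply (levelD K K' (fun _ _ => True)); auto.
    - intros; apply filter_forall; auto.
    - intros a' b' c _. unfold K, K'. apply Derive_correct, (HG a' b' c).
    - intros a' b' c _. unfold K.
      apply (continuous_comp (fun z : R * R * R => (fst (fst z), snd (fst z), snd z, t)) (uncurry4 G)).
      + cproj.
      + apply (HG a' b' c).
    - intros a' b' c _. unfold K'.
      apply (continuous_comp (fun z : R * R * R => (fst (fst z), snd (fst z), snd z, t)) (uncurry4 (pd 1 G))).
      + cproj.
      + apply (HG a' b' c). }
  transitivity (RInt (fun _ : R => 0) 0 1); [|apply RInt_zero].
  apply RInt_ext; intros a _.
  transitivity (RInt (Derive (fun b => RInt (K a b) 0 1)) 0 1).
  { apply RInt_ext; intros b _. symmetry. apply is_derive_unique, (proj1 (L a b)). }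
  apply RInt_Derive_per.
  - intros x. eexists. apply (proj1 (L a x)).
  - intros x.
    replace (Derive (fun b => RInt (K a b) 0 1)) with (fun b => RInt (K' a b) 0 1).
    2:{ apply functional_extensionality; intros b. symmetry. apply is_derive_unique, (proj1 (L a b)). }
    apply (continuous_comp (fun s : R => (a, s)) (fun z : R * R => RInt (K' (fst z) (snd z)) 0 1)).
    + cproj.
    + apply (proj2 (proj2 (L a x))).
  - apply RInt_ext; intros c _. unfold K. replace 1 with (0 + 1) at 1 by ring. apply Hp.
Qed.

Lemma Int3_div0 (G : fld) t :
  (forall a b c, continuous (uncurry4 G) (a, b, c, t) /\
     continuous (uncurry4 (pd 0 G)) (a, b, c, t) /\ ex_pd 0 G a b c t) ->
  (forall a b c, G (a + 1) b c t = G a b c t) ->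
  Int3 (fun a b c => pd 0 G a b c t) = 0.
Proof.
  intros HG Hp. unfold Int3.
  set (K := fun (b : R) a c => G a b c t).
  set (K' := fun (b : R) a c => pd 0 G a b c t).
  assert (L : forall b a,
    is_derive (fun a => RInt (K b a) 0 1) a (RInt (K' b a) 0 1)
    /\ continuous (fun z : R * R => RInt (K (fst z) (snd z)) 0 1) (b, a)
    /\ continuous (fun z : R * R => RInt (K' (fst z) (snd z)) 0 1) (b, a)).
  { intros b a. apply (levelD K K' (fun _ _ => True)); auto.
    - intros; apply filter_forall; auto.
    - intros b' a' c _. unfold K, K'. apply Derive_correct, (HG a' b' c).
    - intros b' a' c _. unfold K.
      apply (continuous_comp (fun z : R * R * R => (snd (fst z), fst (fst z), snd z, t)) (uncurry4 G)).
      + cproj.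
      + apply (HG a' b' c).
    - intros b' a' c _. unfold K'.
      apply (continuous_comp (fun z : R * R * R => (snd (fst z), fst (fst z), snd z, t)) (uncurry4 (pd 0 G))).
      + cproj.
      + apply (HG a' b' c). }
  set (K2 := fun (y : R) a b => RInt (K b a) 0 1).
  set (K2' := fun (y : R) a b => RInt (K' b a) 0 1).
  assert (L2 : forall y a,
    is_derive (fun a => RInt (K2 y a) 0 1) a (RInt (K2' y a) 0 1)
    /\ continuous (fun z : R * R => RInt (K2 (fst z) (snd z)) 0 1) (y, a)
    /\ continuous (fun z : R * R => RInt (K2' (fst z) (snd z)) 0 1) (y, a)).
  { intros y a. apply (levelD K2 K2' (fun _ _ => True)); auto.
    - intros; apply filter_forall; auto.
    - intros y' a' b _. apply (proj1 (L b a')).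
    - intros y' a' b _. unfold K2.
      apply (continuous_comp (fun z : R * R * R => (snd z, snd (fst z))) (fun z : R * R => RInt (K (fst z) (snd z)) 0 1)).
      + cproj.
      + cbn [fst snd]. apply (proj1 (proj2 (L b a'))).
    - intros y' a' b _. unfold K2'.
      apply (continuous_comp (fun z : R * R * R => (snd z, snd (fst z))) (fun z : R * R => RInt (K' (fst z) (snd z)) 0 1)).
      + cproj.
      + cbn [fst snd]. apply (proj2 (proj2 (L b a'))). }
  transitivity (RInt (Derive (fun a => RInt (K2 0 a) 0 1)) 0 1).
  { apply RInt_ext; intros a _. symmetry. apply is_derive_unique, (proj1 (L2 0 a)). }
  apply RInt_Derive_per.
  - intros x. eexists. apply (proj1 (L2 0 x)).
  - intros x.
    replace (Derive (fun a => RInt (K2 0 a) 0 1)) with (fun a => RInt (K2' 0 a) 0 1).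
    2:{ apply functional_extensionality; intros a. symmetry. apply is_derive_unique, (proj1 (L2 0 a)). }
    apply (continuous_comp (fun s : R => (0, s)) (fun z : R * R => RInt (K2' (fst z) (snd z)) 0 1)).
    + cproj.
    + apply (proj2 (proj2 (L2 0 x))).
  - apply RInt_ext; intros b _. apply RInt_ext; intros c _. unfold K. replace 1 with (0 + 1) at 1 by ring. apply Hp.
Qed.


Arguments pd : simpl never.

Lemma Derive_per (f : R -> R) x : (forall s, f (s + 1) = f s) -> Derive f (x + 1) = Derive f x.
Proof.
  intros H. unfold Derive. f_equal. apply Lim_ext. intros h.
  replace (x + 1 + h) with ((x + h) + 1) by ring. rewrite !H. reflexivity.
Qed.

Lemma periodic_pd k f : periodic f -> periodic (pd k f).
Proof.
  intros H a b c t. destruct (H a b c t) as [H1 [H2 H3]].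
  destruct k as [|[|[|k]]]; unfold pd; repeat split.
  - apply Derive_per. intros s. apply H.
  - apply Derive_ext. intros s. apply H.
  - apply Derive_ext. intros s. apply H.
  - apply Derive_ext. intros s. apply H.
  - apply Derive_per. intros s. apply H.
  - apply Derive_ext. intros s. apply H.
  - apply Derive_ext. intros s. apply H.
  - apply Derive_ext. intros s. apply H.
  - apply Derive_per. intros s. apply H.
  - apply Derive_ext. intros s. apply H.
  - apply Derive_ext. intros s. apply H.
  - apply Derive_ext. intros s. apply H.
Qed.

Lemma periodic_pdl l f : periodic f -> periodic (pdl l f).
Proof. induction l; simpl; auto using periodic_pd. Qed.

Fixpoint perE (E : ex) : Prop :=
  match E with
  | EJ f _ => periodic f
  | EA x y => perE x /\ perE y
  | EM x y => perE x /\ perE y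
  | _ => True
  end.

Lemma perE_deriv E k phi rho1 : periodic phi -> perE E -> perE (deriv rho1 phi k E).
Proof. intros Hp. induction E; simpl; intuition. Qed.

Lemma periodic_den rho1 F phi E : periodic phi -> perE E -> periodic (den rho1 F phi E).
Proof.
  intros Hp. induction E; simpl; intros HE a b c t.
  - apply periodic_pdl, HE.
  - repeat split.
  - destruct HE as [H1 H2]. destruct (IHE1 H1 a b c t) as [? [? ?]]. destruct (IHE2 H2 a b c t) as [? [? ?]].
    repeat split; congruence.
  - destruct HE as [H1 H2]. destruct (IHE1 H1 a b c t) as [? [? ?]]. destruct (IHE2 H2 a b c t) as [? [? ?]].
    repeat split; congruence.
  - unfold dens. destruct (Hp a b c t) as [? [? ?]]. repeat split; congruence.
  - unfold dens. destruct (Hp a b c t) as [? [? ?]]. repeat split; congruence.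
  - unfold dens. destruct (Hp a b c t) as [? [? ?]]. repeat split; congruence.
  - destruct (Hp a b c t) as [? [? ?]]. repeat split; congruence.
  - destruct (Hp a b c t) as [? [? ?]]. repeat split; congruence.
  - destruct (Hp a b c t) as [? [? ?]]. repeat split; congruence.
Qed.

Lemma slab4_open T a b c t : 0 < t < T -> locally (a, b, c, t) (fun q : P4 => 0 < tm q < T).
Proof.
  intros Ht. assert (Hp : 0 < Rmin t (T - t)) by (apply Rmin_pos; lra).
  exists (mkposreal _ Hp). intros [[[a' b'] c'] t'] [_ H]. apply ballR in H. simpl in H |- *.
  apply Rabs_def2 in H. unfold minus, plus, opp in H; simpl in H.
  assert (H1 := Rmin_l t (T - t)). assert (H2 := Rmin_r t (T - t)). lra.
Qed.

Lemma cont_feq T (f g : fld) a b c t :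
  (forall a b c t, 0 < t < T -> f a b c t = g a b c t) -> 0 < t < T ->
  continuous (uncurry4 g) (a, b, c, t) -> continuous (uncurry4 f) (a, b, c, t).
Proof.
  intros H Ht Hg.
  apply (filterlim_ext_loc (uncurry4 g)).
  - apply (fun HH => filter_imp _ _ HH (slab4_open T a b c t Ht)).
    intros [[[a' b'] c'] t'] Hq. simpl in Hq. symmetry. apply H, Hq.
  - simpl. rewrite (H a b c t Ht). exact Hg.
Qed.

Lemma Ftilde_2 rho1 F x : 0 < rho1 < rho2 -> C2_on_m11 F ->
  -1 < - kappa rho1 * x + kappa rho1 - 1 < 1 ->
  Derive_n (Ftilde rho1 F) 2 x = (kappa rho1) ^ 2 * Derive (Derive F) (- kappa rho1 * x + kappa rho1 - 1).
Proof.
  intros Hr HF Hx. simpl.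
  set (g := fun r => - kappa rho1 * r + kappa rho1 - 1).
  assert (Hg : forall r, is_derive g r (- kappa rho1)).
  { intros r. unfold g. auto_derive; auto. ring. }
  assert (Hc : continuous g x).
  { apply (ex_derive_continuous (K := R_AbsRing) (V := R_NormedModule)). eexists. apply Hg. }
  assert (Hloc : locally x (fun r => -1 < g r < 1)).
  { assert (Hl1 : locally (g x) (fun y => -1 < y < 1)).
    { apply (open_and (fun y => -1 < y) (fun y => y < 1)); [apply open_gt|apply open_lt|exact Hx]. }
    apply Hc in Hl1. exact Hl1. }
  assert (E1 : forall r, -1 < g r < 1 -> Derive (Derive_n (Ftilde rho1 F) 0) r = - kappa rho1 * Derive F (g r)).
  { intros r Hr'. simpl. unfold Ftilde. fold (g r).
    apply is_derive_unique.
    replace (- kappa rho1 * Derive F (g r)) with (scal (- kappa rho1) (Derive F (g r))) by reflexivity.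
    apply (is_derive_comp F g r).
    - apply Derive_correct, (HF _ Hr').
    - apply Hg. }
  rewrite (Derive_ext_loc _ (fun r => - kappa rho1 * Derive F (g r))).
  2:{ apply (fun HH => filter_imp _ _ HH Hloc). intros r Hr'. apply E1, Hr'. }
  assert (D : is_derive (fun r => - kappa rho1 * Derive F (g r)) x (- kappa rho1 * (scal (- kappa rho1) (Derive (Derive F) (g x))))).
  { apply is_derive_scal. apply (is_derive_comp (Derive F) g x).
    - apply Derive_correct, (HF _ Hx).
    - apply Hg. }
  transitivity (- kappa rho1 * (scal (- kappa rho1) (Derive (Derive F) (g x)))); [apply (is_derive_unique _ _ _ D)|]. unfold scal; simpl; unfold mult; simpl. unfold g. ring.
Qed.


Arguments pd : simpl never.

Section Main.
Variables (rho1 T : R) (F : R -> R) (u : nat -> fld) (p phi mu : fld).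
Hypotheses (hrho1 : 0 < rho1 < rho2) (hF : C2_on_m11 F)
  (hu_sm : forall i, (i < 3)%nat -> smooth_on (slab T) (u i))
  (hp_sm : smooth_on (slab T) p) (hphi_sm : smooth_on (slab T) phi)
  (hmu_sm : smooth_on (slab T) mu)
  (hphi_range : forall a b c t, 0 < t < T -> -1 < phi a b c t < 1)
  (hu_per : forall i, (i < 3)%nat -> periodic (u i))
  (hp_per : periodic p) (hphi_per : periodic phi) (hmu_per : periodic mu)
  (hmom : forall i, (i < 3)%nat -> forall a b c t, 0 < t < T ->
     dt (fun a' b' c' t' => dens rho1 phi a' b' c' t' * u i a' b' c' t') a b c t
     + sum3 (fun j => pd j (fun a' b' c' t' =>
           dens rho1 phi a' b' c' t' * u i a' b' c' t' * u j a' b' c' t') a b c t)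
     + pd i p a b c t
     = sum3 (fun j => pd j (fun a' b' c' t' =>
           dens rho1 phi a' b' c' t' *
             ((pd j (u i) a' b' c' t' + pd i (u j) a' b' c' t') / 2)) a b c t)
       - phi a b c t * pd i mu a b c t)
  (hmass : forall a b c t, 0 < t < T ->
     dt (dens rho1 phi) a b c t
     + sum3 (fun j => pd j (fun a' b' c' t' =>
           dens rho1 phi a' b' c' t' * u j a' b' c' t') a b c t) = 0)
  (hCH : forall a b c t, 0 < t < T ->
     dt phi a b c t
     + sum3 (fun j => pd j (fun a' b' c' t' => phi a' b' c' t' * u j a' b' c' t') a b c t)
     = lap (fun a' b' c' t' => mu a' b' c' t' + alpha rho1 * p a' b' c' t') a b c t)
  (hmu : forall a b c t, 0 < t < T ->
     mu a b c t = - lap phi a b c t + Derive F (phi a b c t)) .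

Local Notation D := (den rho1 F phi).
Local Notation dv := (deriv rho1 phi).
Local Notation U i := (EJ (u i) nil).
Local Notation DU k i := (EJ (u i) (k :: nil)).
Local Notation PH := (EJ phi nil).
Local Notation DPH k := (EJ phi (k :: nil)).
Local Notation PP := (EJ p nil).
Local Notation MUE := (EJ mu nil).
Local Notation al := (alpha rho1).
Local Notation ka := (kappa rho1).
Local Notation s3 g := (EA (EA (g 0%nat) (g 1%nat)) (g 2%nat)).
Local Notation DR k := (dv k ERho).
Local Notation WW k := (dv k ELR).
Local Notation MM := (EA MUE (EM (EC al) PP)).
Local Notation DM k := (dv k MM).
Local Notation DTR := (dv 3%nat ERho).
Local Notation DTPH := (EJ phi (3%nat :: nil)).
Local Notation KK := (EM (EC (/2)) (EM ERho (s3 (fun i => EM (U i) (U i))))).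
Local Notation Dij i j := (EM (EC (/2)) (EA (DU j i) (DU i j))).
Local Notation divu := (s3 (fun k => DU k k)).
Local Notation udr := (s3 (fun k => EM (U k) (DR k))).
Local Notation gr2 := (s3 (fun k => EM (DR k) (DR k))).

Definition Psi (j : nat) : ex :=
  EA (EA (EA (EA (EA (EA (EA (EA (EA (EA (EA (EA (EA (EA (EA (EA (EA (EA (EA (EA
   (EM (EC (-1)) (EM KK (U j)))
   (s3 (fun i => EM ERho (EM (Dij i j) (U i)))))
   (s3 (fun i => EM (WW i) (EM ERho (Dij i j)))))
   (EM (U j) DTR))
   (EM (WW j) DTR))
   (EM (DR j) (EM udr EIR)))
   (EM (EC (-1/2)) (EM (U j) (EM gr2 EIR))))
   (EM divu (DR j)))
   (EM (EC (-1)) (s3 (fun k => EM (DU k j) (DR k)))))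
   (EM ERho (EM (U j) divu)))
   (EM (EC (-1)) (s3 (fun k => EM ERho (EM (U k) (DU k j))))))
   (EM (DPH j) DTPH))
   (EM MUE (DM j)))
   (EM (EC (-1)) (EM MUE (EM PH (U j)))))
   (EM (EC (-1)) (EM PP (U j))))
   (EM (EC al) (EM PP (DM j))))
   (EM (EC ka) (EM MUE (DR j))))
   (EM (EC (- ka)) (EM EF1 (DR j))))
   (EM (EC (1 / al ^ 2)) (EM ELR (U j))))
   (EM (EC (- (1 / al ^ 2) * al)) (EM ELR (DM j))))
   (EM (EC (1 / al ^ 2)) (U j)).

Definition Ee : ex :=
  EA (EA (EA
   (EM (EM ERho (EC (/2))) (s3 (fun j => EM (EA (U j) (WW j)) (EA (U j) (WW j)))))
   (EM (EC (1/2)) (s3 (fun j => EM (DPH j) (DPH j)))))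
   EF0)
   (EM (EC (- (1 / al ^ 2))) ELR).

Definition efld : fld := fun a b c t =>
  let rho := dens rho1 phi in
    rho a b c t / 2 *
      sum3 (fun j => (u j a b c t + pd j (fun a' b' c' t' => ln (rho a' b' c' t')) a b c t) ^ 2)
    + 1 / 2 * sum3 (fun j => (pd j phi a b c t) ^ 2)
    + F (phi a b c t)
    - 1 / (alpha rho1) ^ 2 * ln (rho a b c t).

Lemma energy_efld t : energy rho1 F u phi t = Int3 (fun a b c => efld a b c t).
Proof. reflexivity. Qed.


Definition d1 : fld := fun a b c t => let mup : fld := fun a b c t => mu a b c t + alpha rho1 * p a b c t in
  sum3 (fun j => (pd j mup a b c t) ^ 2).
Definition d2 : fld := fun a b c t => let rho := dens rho1 phi in
  Derive_n (Ftilde rho1 F) 2 (rho a b c t) * sum3 (fun j => (pd j rho a b c t) ^ 2).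
Definition d3 : fld := fun a b c t => let rho := dens rho1 phi in (lap rho a b c t) ^ 2.
Definition d4 : fld := fun a b c t => let rho := dens rho1 phi in
  rho a b c t * sum3 (fun i => sum3 (fun j => (pd j (u i) a b c t - pd i (u j) a b c t) ^ 2)).

Lemma dissipation_d t : dissipation rho1 F u p phi mu t =
  Int3 (fun a b c => d1 a b c t) + Int3 (fun a b c => d2 a b c t)
  + (kappa rho1) ^ 2 * Int3 (fun a b c => d3 a b c t) + 1 / 4 * Int3 (fun a b c => d4 a b c t).
Proof. reflexivity. Qed.

Lemma hu0 : Sm T (u 0%nat). Proof. apply hu_sm; lia. Qed.
Lemma hu1 : Sm T (u 1%nat). Proof. apply hu_sm; lia. Qed.
Lemma hu2 : Sm T (u 2%nat). Proof. apply hu_sm; lia. Qed.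
Lemma hp : Sm T p. Proof. exact hp_sm. Qed.
Lemma hph : Sm T phi. Proof. exact hphi_sm. Qed.
Lemma hmuS : Sm T mu. Proof. exact hmu_sm. Qed.

Ltac wft := cbn [wf deriv Psi Ee]; repeat (match goal with |- _ /\ _ => split | |- True => exact I end);
  first [exact hu0 | exact hu1 | exact hu2 | exact hp | exact hph | exact hmuS].

Lemma PDE E k a b c t : wf T E -> noF2 E = true -> 0 < t < T ->
  pd k (D E) a b c t = D (dv k E) a b c t.
Proof. intros; eapply pd_den; eauto. Qed.

Lemma PDE2 E j k a b c t : wf T E -> noF2 E = true -> noF2 (dv k E) = true -> 0 < t < T ->
  pd j (pd k (D E)) a b c t = D (dv j (dv k E)) a b c t.
Proof. intros; eapply pd2_den; eauto. Qed.

Lemma al_pos : 0 < alpha rho1.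
Proof. unfold alpha, rho2 in *. apply Rdiv_lt_0_compat; lra. Qed.

Ltac nzt := repeat split; repeat apply pow_nonzero;
  first [ apply Rgt_not_eq; assumption | apply Rgt_not_eq; apply al_pos | lra ].

Lemma efld_Ee a b c t : 0 < t < T -> efld a b c t = D Ee a b c t.
Proof.
  intros Ht. unfold efld, sum3.
  rewrite !(PDE ELR) by (auto; reflexivity).
  cbn [den deriv Ee pdl]. assert (Hd := dens_pos T rho1 phi hrho1 hphi_range a b c t Ht). field; nzt.
Qed.

Lemma pointwise a b c t : 0 < t < T ->
  pd 3 efld a b c t = - (d1 a b c t + d2 a b c t + (kappa rho1) ^ 2 * d3 a b c t + 1 / 4 * d4 a b c t)
    + (pd 0 (D (Psi 0)) a b c t + pd 1 (D (Psi 1)) a b c t + pd 2 (D (Psi 2)) a b c t).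
Proof.
  intros Ht.
  rewrite (pd_feq T 3 efld (D Ee)) by (auto; intros; apply efld_Ee; auto).
  rewrite !PDE by (auto; try reflexivity; wft).
  unfold d1, d2, d3, d4, lap, sum3.
  rewrite !(PDE MM) by (auto; try reflexivity; wft).
  rewrite !(PDE ERho) by (auto; try reflexivity; wft).
  rewrite !(PDE2 ERho) by (auto; try reflexivity; wft).
  assert (Hd := dens_pos T rho1 phi hrho1 hphi_range a b c t Ht).
  assert (Hal := al_pos).
  assert (Hr := hphi_range a b c t Ht).
  assert (Hpe : - kappa rho1 * dens rho1 phi a b c t + kappa rho1 - 1 = phi a b c t).
  { unfold kappa, alpha, dens, rho2 in *. field. split; lra. }
  rewrite Ftilde_2 by (auto; rewrite Hpe; exact Hr). rewrite Hpe.
  assert (Hm0 : pd 3 (D (EM ERho (U 0%nat))) a b c t + sum3 (fun j => pd j (D (EM (EM ERho (U 0%nat)) (U j))) a b c t)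
     + pd 0 (D PP) a b c t = sum3 (fun j => pd j (D (EM ERho (EM (EA (DU j 0%nat) (DU 0%nat j)) (EC (/2))))) a b c t)
     - D PH a b c t * pd 0 (D MUE) a b c t) by exact (hmom 0 ltac:(lia) a b c t Ht).
  assert (Hm1 : pd 3 (D (EM ERho (U 1%nat))) a b c t + sum3 (fun j => pd j (D (EM (EM ERho (U 1%nat)) (U j))) a b c t)
     + pd 1 (D PP) a b c t = sum3 (fun j => pd j (D (EM ERho (EM (EA (DU j 1%nat) (DU 1%nat j)) (EC (/2))))) a b c t)
     - D PH a b c t * pd 1 (D MUE) a b c t) by exact (hmom 1 ltac:(lia) a b c t Ht).
  assert (Hm2 : pd 3 (D (EM ERho (U 2%nat))) a b c t + sum3 (fun j => pd j (D (EM (EM ERho (U 2%nat)) (U j))) a b c t)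
     + pd 2 (D PP) a b c t = sum3 (fun j => pd j (D (EM ERho (EM (EA (DU j 2%nat) (DU 2%nat j)) (EC (/2))))) a b c t)
     - D PH a b c t * pd 2 (D MUE) a b c t) by exact (hmom 2 ltac:(lia) a b c t Ht).
  assert (Hms : pd 3 (D ERho) a b c t + sum3 (fun j => pd j (D (EM ERho (U j))) a b c t) = 0)
    by exact (hmass a b c t Ht).
  assert (Hch : pd 3 (D PH) a b c t + sum3 (fun j => pd j (D (EM PH (U j))) a b c t)
     = sum3 (fun j => pd j (pd j (D MM)) a b c t)) by exact (hCH a b c t Ht).
  assert (Hmu : D MUE a b c t = - sum3 (fun j => pd j (pd j (D PH)) a b c t) + D EF1 a b c t)
    by exact (hmu a b c t Ht).
  unfold sum3 in Hm0, Hm1, Hm2, Hms, Hch, Hmu.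
  rewrite !PDE in Hm0 by (auto; try reflexivity; wft).
  rewrite !PDE in Hm1 by (auto; try reflexivity; wft).
  rewrite !PDE in Hm2 by (auto; try reflexivity; wft).
  rewrite !PDE in Hms by (auto; try reflexivity; wft).
  rewrite !PDE2 in Hch by (auto; try reflexivity; wft).
  rewrite !PDE2 in Hmu by (auto; try reflexivity; wft).
  rewrite !PDE in Hch by (auto; try reflexivity; wft).
  cbn [den deriv ins pdl Nat.leb Psi Ee] in *.
  rewrite Hmu. clear Hmu.
  match type of Hm0 with ?L = ?R => replace (pd 3 (u 0%nat) a b c t) with
    (pd 3 (u 0%nat) a b c t - (L - R) / dens rho1 phi a b c t) by (rewrite Hm0; field; nzt) end.
  match type of Hm1 with ?L = ?R => replace (pd 3 (u 1%nat) a b c t) with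
    (pd 3 (u 1%nat) a b c t - (L - R) / dens rho1 phi a b c t) by (rewrite Hm1; field; nzt) end.
  match type of Hm2 with ?L = ?R => replace (pd 3 (u 2%nat) a b c t) with
    (pd 3 (u 2%nat) a b c t - (L - R) / dens rho1 phi a b c t) by (rewrite Hm2; field; nzt) end.
  clear Hm0 Hm1 Hm2.
  match type of Hch with ?L = ?R => replace (pd 3 phi a b c t) with
    (pd 3 phi a b c t - (L - R)) by (rewrite Hch; ring) end.
  match type of Hch with ?L = ?R => match type of Hms with ?L2 = _ =>
    replace (pd 0 (u 0%nat) a b c t) with
    (pd 0 (u 0%nat) a b c t - (L2 - Bc rho1 * (L - R)) / (dens rho1 phi a b c t - Bc rho1 * phi a b c t))
    by (rewrite Hch, Hms; field; unfold dens, Bc, rho2; lra) end end.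
  clear Hch Hms.
  remember (dens rho1 phi a b c t) as R0 eqn:HR0.
  assert (Hphi : phi a b c t = (2 * R0 - rho1 - 1) / (rho1 - 1)).
  { rewrite HR0. unfold dens, rho2. field. unfold rho2 in hrho1. lra. }
  rewrite Hphi. clear HR0 Hphi Hpe Hr.
  unfold Bc, kappa, alpha, rho2 in *.
  field. repeat split; lra.
Qed.

Lemma ex_pd_feq m g h a b c t :
  (forall a b c t, 0 < t < T -> g a b c t = h a b c t) -> 0 < t < T ->
  ex_pd m g a b c t -> ex_pd m h a b c t.
Proof.
  intros H Ht. destruct m as [|[|[|m]]]; unfold ex_pd.
  - apply ex_derive_ext. intros s. apply H, Ht.
  - apply ex_derive_ext. intros s. apply H, Ht.
  - apply ex_derive_ext. intros s. apply H, Ht.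
  - apply ex_derive_ext_loc.
    assert (Hp : 0 < Rmin (t - 0) (T - t)) by (apply Rmin_pos; lra).
    exists (mkposreal _ Hp). intros s Hs. apply H.
    apply ballR in Hs. simpl in Hs. apply Rabs_def2 in Hs. unfold minus, plus, opp in Hs; simpl in Hs.
    assert (H1 := Rmin_l (t - 0) (T - t)). assert (H2 := Rmin_r (t - 0) (T - t)). lra.
Qed.

Lemma cont_den_slab (f : fld) E : wf T E ->
  (forall a b c t, 0 < t < T -> f a b c t = D E a b c t) ->
  forall a b c t, 0 < t < T -> continuous (uncurry4 f) (a, b, c, t).
Proof.
  intros Hw H a b c t Ht. apply (cont_feq T f (D E)); auto.
  apply (den_cont T rho1 F phi hph hrho1 hF hphi_range E (a, b, c, t) Hw Ht).
Qed.

Lemma C3_den (f : fld) E t : wf T E -> 0 < t < T ->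
  (forall a b c t, 0 < t < T -> f a b c t = D E a b c t) -> C3 (fun a b c => f a b c t).
Proof.
  intros Hw Ht H. apply C3_of_4. intros a b c. apply (cont_den_slab f E Hw H a b c t Ht).
Qed.

Definition Ed1 := s3 (fun j => EM (DM j) (DM j)).
Definition Ed2 := EM (EM (EC (ka ^ 2)) EF2) (s3 (fun j => EM (DR j) (DR j))).
Definition Ed3 := EM (s3 (fun j => dv j (DR j))) (s3 (fun j => dv j (DR j))).
Definition Ed4 := EM ERho (s3 (fun i => s3 (fun j => EM (EA (DU j i) (EM (EC (-1)) (DU i j))) (EA (DU j i) (EM (EC (-1)) (DU i j)))))).

Lemma d1_den a b c t : 0 < t < T -> d1 a b c t = D Ed1 a b c t.
Proof.
  intros Ht. unfold d1, sum3. rewrite !(PDE MM) by (auto; try reflexivity; wft).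
  cbn [den deriv Ed1 pdl ins Nat.leb]. ring.
Qed.

Lemma d2_den a b c t : 0 < t < T -> d2 a b c t = D Ed2 a b c t.
Proof.
  intros Ht. unfold d2, sum3. rewrite !(PDE ERho) by (auto; try reflexivity; wft).
  assert (Hr := hphi_range a b c t Ht).
  assert (Hpe : - kappa rho1 * dens rho1 phi a b c t + kappa rho1 - 1 = phi a b c t).
  { unfold kappa, alpha, dens, rho2 in *. field. split; lra. }
  rewrite Ftilde_2 by (auto; rewrite Hpe; exact Hr). rewrite Hpe.
  cbn [den deriv Ed2 pdl ins Nat.leb]. ring.
Qed.

Lemma d3_den a b c t : 0 < t < T -> d3 a b c t = D Ed3 a b c t.
Proof.
  intros Ht. unfold d3, lap, sum3. rewrite !(PDE2 ERho) by (auto; try reflexivity; wft).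
  cbn [den deriv Ed3 pdl ins Nat.leb]. ring.
Qed.

Lemma d4_den a b c t : 0 < t < T -> d4 a b c t = D Ed4 a b c t.
Proof.
  intros Ht. unfold d4, sum3. cbn [den deriv Ed4 pdl ins Nat.leb]. ring.
Qed.

Lemma Psi_per j : (j < 3)%nat -> periodic (D (Psi j)).
Proof.
  intros Hj. apply periodic_den; auto.
  assert (H0 := hu_per 0 ltac:(lia)). assert (H1 := hu_per 1 ltac:(lia)). assert (H2 := hu_per 2 ltac:(lia)).
  destruct j as [|[|[|j]]]; [| | |lia];
  cbn [perE Psi deriv]; repeat (match goal with |- _ /\ _ => split | |- True => exact I end); auto.
Qed.

Lemma wfPsi j : (j < 3)%nat -> wf T (Psi j).
Proof. intros Hj. destruct j as [|[|[|j]]]; [| | |lia]; wft. Qed.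
Lemma nfPsi j : (j < 3)%nat -> noF2 (Psi j) = true.
Proof. intros Hj. destruct j as [|[|[|j]]]; [| | |lia]; reflexivity. Qed.

Lemma Int3_Psi j t : (j < 3)%nat -> 0 < t < T -> Int3 (fun a b c => pd j (D (Psi j)) a b c t) = 0.
Proof.
  intros Hj Ht.
  assert (W := wfPsi j Hj). assert (N := nfPsi j Hj).
  assert (W' : wf T (dv j (Psi j))) by (apply wf_deriv; auto).
  assert (Cg : forall a b c, continuous (uncurry4 (D (Psi j))) (a, b, c, t)).
  { intros. apply (den_cont T rho1 F phi hph hrho1 hF hphi_range _ (a, b, c, t) W Ht). }
  assert (Cd : forall a b c, continuous (uncurry4 (pd j (D (Psi j)))) (a, b, c, t)).
  { intros. apply (cont_den_slab _ (dv j (Psi j)) W'); auto. intros. apply PDE; auto. }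
  assert (Ex : forall a b c, ex_pd j (D (Psi j)) a b c t).
  { intros. eapply expd_den; eauto. }
  assert (Pe := Psi_per j Hj).
  destruct j as [|[|[|j]]]; [| | |lia].
  - apply Int3_div0. intros; auto. intros. apply Pe.
  - apply Int3_div1. intros; auto. intros. apply Pe.
  - apply Int3_div2. intros; auto. intros. apply Pe.
Qed.

Lemma main_sec t : 0 < t < T -> is_derive (energy rho1 F u phi) t (- dissipation rho1 F u p phi mu t).
Proof.
  intros Ht.
  assert (WE : wf T Ee) by wft.
  assert (NE : noF2 Ee = true) by reflexivity.
  assert (WE' : wf T (dv 3 Ee)) by (apply wf_deriv; auto).
  assert (Heq3 : forall a b c t, 0 < t < T -> pd 3 efld a b c t = D (dv 3 Ee) a b c t).
  { intros a b c t' Ht'. rewrite (pd_feq T 3 efld (D Ee)) by (auto; intros; apply efld_Ee; auto).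
    apply PDE; auto. }
  assert (HH : forall a b c t, 0 < t < T -> continuous (uncurry4 efld) (a, b, c, t) /\
       continuous (uncurry4 (pd 3 efld)) (a, b, c, t) /\ ex_pd 3 efld a b c t).
  { intros a b c t' Ht'. split; [|split].
    - apply (cont_den_slab efld Ee WE); auto. intros; apply efld_Ee; auto.
    - apply (cont_den_slab _ (dv 3 Ee) WE'); auto.
    - apply (ex_pd_feq 3 (D Ee) efld); auto. intros; symmetry; apply efld_Ee; auto.
      eapply expd_den; eauto. }
  assert (HD := DInt3 T efld HH t Ht).
  eapply is_derive_ext; [intros; reflexivity|].
  replace (- dissipation rho1 F u p phi mu t) with (Int3 (fun a b c => pd 3 efld a b c t)); [exact HD|].
  rewrite (Int3_ext _ (fun a b c => (-1) * d1 a b c t + ((-1) * d2 a b c t + ((- kappa rho1 ^ 2) * d3 a b c t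
      + ((- (1/4)) * d4 a b c t + (pd 0 (D (Psi 0)) a b c t + (pd 1 (D (Psi 1)) a b c t + pd 2 (D (Psi 2)) a b c t)))))))
    by (intros; rewrite pointwise by auto; ring).
  assert (C1 : C3 (fun a b c => d1 a b c t)) by (apply (C3_den d1 Ed1); [unfold Ed1; wft | exact Ht | intros; apply d1_den; auto]).
  assert (C2 : C3 (fun a b c => d2 a b c t)) by (apply (C3_den d2 Ed2); [unfold Ed2; wft | exact Ht | intros; apply d2_den; auto]).
  assert (C3' : C3 (fun a b c => d3 a b c t)) by (apply (C3_den d3 Ed3); [unfold Ed3; wft | exact Ht | intros; apply d3_den; auto]).
  assert (C4 : C3 (fun a b c => d4 a b c t)) by (apply (C3_den d4 Ed4); [unfold Ed4; wft | exact Ht | intros; apply d4_den; auto]).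
  assert (G0 : C3 (fun a b c => pd 0 (D (Psi 0)) a b c t)).
  { apply (C3_den _ (dv 0 (Psi 0))); [apply wf_deriv; [exact hph | exact hrho1 | apply wfPsi; lia] | exact Ht |].
    intros. apply PDE; [apply wfPsi; lia | apply nfPsi; lia | auto]. }
  assert (G1 : C3 (fun a b c => pd 1 (D (Psi 1)) a b c t)).
  { apply (C3_den _ (dv 1 (Psi 1))); [apply wf_deriv; [exact hph | exact hrho1 | apply wfPsi; lia] | exact Ht |].
    intros. apply PDE; [apply wfPsi; lia | apply nfPsi; lia | auto]. }
  assert (G2 : C3 (fun a b c => pd 2 (D (Psi 2)) a b c t)).
  { apply (C3_den _ (dv 2 (Psi 2))); [apply wf_deriv; [exact hph | exact hrho1 | apply wfPsi; lia] | exact Ht |].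
    intros. apply PDE; [apply wfPsi; lia | apply nfPsi; lia | auto]. }
  rewrite Int3_plus by (repeat first [assumption | apply C3_scal | apply C3_plus]).
  rewrite Int3_plus by (repeat first [assumption | apply C3_scal | apply C3_plus]).
  rewrite Int3_plus by (repeat first [assumption | apply C3_scal | apply C3_plus]).
  rewrite Int3_plus by (repeat first [assumption | apply C3_scal | apply C3_plus]).
  rewrite Int3_plus by (repeat first [assumption | apply C3_scal | apply C3_plus]).
  rewrite Int3_plus by (repeat first [assumption | apply C3_scal | apply C3_plus]).
  rewrite !Int3_scal by assumption.
  rewrite !Int3_Psi by (auto; lia).
  rewrite dissipation_d. ring.
Qed.
End Main.


Theorem lemma2p4 (rho1 T : R) (F : R -> R) (u : nat -> fld) (p phi mu : fld)
  (hrho1 : 0 < rho1 < rho2) (hT : 0 < T) (hF : C2_on_m11 F)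
  (hu_sm : forall i, (i < 3)%nat -> smooth_on (slab T) (u i))
  (hp_sm : smooth_on (slab T) p) (hphi_sm : smooth_on (slab T) phi)
  (hmu_sm : smooth_on (slab T) mu)
  (hu_per : forall i, (i < 3)%nat -> periodic (u i))
  (hp_per : periodic p) (hphi_per : periodic phi) (hmu_per : periodic mu)
  (hphi_range : forall a b c t, 0 < t < T -> -1 < phi a b c t < 1)
  (hmom : forall i, (i < 3)%nat -> forall a b c t, 0 < t < T ->
     dt (fun a' b' c' t' => dens rho1 phi a' b' c' t' * u i a' b' c' t') a b c t
     + sum3 (fun j => pd j (fun a' b' c' t' =>
           dens rho1 phi a' b' c' t' * u i a' b' c' t' * u j a' b' c' t') a b c t)
     + pd i p a b c t
     = sum3 (fun j => pd j (fun a' b' c' t' =>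
           dens rho1 phi a' b' c' t' *
             ((pd j (u i) a' b' c' t' + pd i (u j) a' b' c' t') / 2)) a b c t)
       - phi a b c t * pd i mu a b c t)
  (hmass : forall a b c t, 0 < t < T ->
     dt (dens rho1 phi) a b c t
     + sum3 (fun j => pd j (fun a' b' c' t' =>
           dens rho1 phi a' b' c' t' * u j a' b' c' t') a b c t) = 0)
  (hCH : forall a b c t, 0 < t < T ->
     dt phi a b c t
     + sum3 (fun j => pd j (fun a' b' c' t' => phi a' b' c' t' * u j a' b' c' t') a b c t)
     = lap (fun a' b' c' t' => mu a' b' c' t' + alpha rho1 * p a' b' c' t') a b c t)
  (hmu : forall a b c t, 0 < t < T ->
     mu a b c t = - lap phi a b c t + Derive F (phi a b c t)) :
  forall t, 0 < t < T ->
    is_derive (energy rho1 F u phi) t (- dissipation rho1 F u p phi mu t).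
Proof.
  intros t Ht. eapply main_sec; eauto.
Qed.
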